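(* Let $\mathcal{A}$ be a complete deterministic one-clock timed automaton over the alphabet $\Sigma$, and let $\textsf{MQ}$ be the membership function of $L(\mathcal{A})$, i.e. $\textsf{MQ}(\omega)=+$ if $\omega\in L(\mathcal{A})$ and $\textsf{MQ}(\omega)=-$ otherwise. Let $\omega_1,\omega_2$ be timed words, $e$ a timed word (the suffix), and $i_1,i_2$ natural numbers such that $i_1=k_{\mathcal{A}}(\omega_1)$ and $i_2=k_{\mathcal{A}}(\omega_2)$. If the test $T(\omega_1,\omega_2,i_1,i_2,e)=\bot$, then the runs of $\mathcal{A}$ on $\omega_1$ and on $\omega_2$ end in different locations of $\mathcal{A}$.
   Context: A one-clock timed automaton (OTA) is a tuple $\mathcal{A}=(\Sigma,Q,q_0,F,c,\Delta)$ with finite alphabet $\Sigma$, finite location set $Q$, initial location $q_0$, accepting locations $F\subseteq Q$, a single clock $c$, and finite transition set $\Delta\subseteq Q\times\Sigma\times\Phi_c\times\{\top,\bot\}\times Q$, where a guard in $\Phi_c$ is an interval of $\mathbb{R}_{\ge 0}$ with endpoints in $\mathbb{N}\cup\{\infty\}$. A timed word is $\omega=(\sigma_1,t_1)\cdots(\sigma_n,t_n)$ with $\sigma_i\in\Sigma$, $t_i\in\mathbb{R}_{\ge0}$ ($t_i$ is the delay before $\sigma_i$); $|\omega|=n$. A run on $\omega$ is $(q_0,\nu_0)\to(q_1,\nu_1)\to\cdots\to(q_n,\nu_n)$ with $\nu_0=0$, where for each $i$ there is a transition $(q_{i-1},\sigma_i,\phi_i,b_i,q_i)\in\Delta$ with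 $\nu_{i-1}+t_i\in\phi_i$, and $\nu_i=0$ if $b_i=\top$, $\nu_i=\nu_{i-1}+t_i$ otherwise; $\omega$ is accepted if $q_n\in F$. The OTA is deterministic (DOTA) if guards of transitions from the same location with the same action are pairwise disjoint, and complete if for each location and action these guards partition $\mathbb{R}_{\ge0}$ (so each timed word has exactly one run). The last reset $k_{\mathcal{A}}(\omega)$ is $0$ if $b_i=\bot$ for all $i$ in the run of $\omega$, and otherwise the largest $i$ with $b_i=\top$. For a timed word $\omega$ of length $n$ and $0\le i\le n$, let $\nu_c(\omega,i)=\sum_{j=i+1}^{n}t_j$ (equal to $0$ if $i=n$). The test $T(\omega_1,\omega_2,i_1,i_2,e)$ is defined as follows. If $e$ is empty, $T=\top$ iff $\textsf{MQ}(\omega_1)=\textsf{MQ}(\omega_2)$. If $e=(\sigma_1,t_1)(\sigma_2,t_2)\cdots(\sigma_m,t_m)$ is nonempty, let $\nu_1=\nu_c(\omega_1,i_1)$, $\nu_2=\nu_c(\omega_2,i_2)$; if $\nu_1>\nu_2$ put $e_1=e$ and $e_2=(\sigma_1,t_1+(\nu_1-\nu_2))(\sigma_2,t_2)\cdots(\sigma_m,t_m)$; if $\nu_1<\nu_2$ put $e_1=(\sigma_1,t_1+(\nu_2-\nu_1))(\sigma_2,t_2)\cdots(\sigma_m,t_m)$ and $e_2=e$; if $\nu_1=\nu_2$ put $e_1=e_2=e$. Then $T=\top$ iff $\textsf{MQ}(\omega_1\cdot e_1)=\textsf{MQ}(\omega_2\cdot e_2)$, and $T=\bot$ otherwise. 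*)

(* Defs.v *)
From Stdlib Require Import Reals List.
From mathcomp Require Import ssreflect ssrbool eqtype fintype.
Import ListNotations.
Open Scope R_scope.

(* Guard: interval of R>=0 with endpoints in N u {oo}.
   lower endpoint lo (closed iff lo_cl); upper endpoint hi = None means +oo (open). *)
Record guard := Guard { lo : nat; lo_cl : bool; hi : option nat; hi_cl : bool }.

Definition in_guard (g : guard) (x : R) : Prop :=
  (if lo_cl g then INR (lo g) <= x else INR (lo g) < x) /\
  match hi g with
  | None => True
  | Some h => if hi_cl g then x <= INR h else x < INR h
  end.

Section OTA.
Variables (Sigma Q : finType).

Record trans := Trans { src : Q; act : Sigma; grd : guard; rst : bool; dst : Q }.

Record OTA := MkOTA { q0 : Q; accepting : Q -> bool; delta : list trans }.

Definition timed_word := list (Sigma * R).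

Definition valid_tw (w : timed_word) : Prop := Forall (fun p => 0 <= snd p) w.

Definition deterministic (A : OTA) : Prop :=
  forall t1 t2, In t1 (delta A) -> In t2 (delta A) ->
    src t1 = src t2 -> act t1 = act t2 ->
    (exists x, in_guard (grd t1) x /\ in_guard (grd t2) x) -> t1 = t2.

Definition complete (A : OTA) : Prop :=
  forall (q : Q) (a : Sigma) (x : R), 0 <= x ->
    exists t, In t (delta A) /\ src t = q /\ act t = a /\ in_guard (grd t) x.

Fixpoint run_from (A : OTA) (q : Q) (nu : R) (w : timed_word) (trs : list trans)
  : Prop :=
  match w, trs with
  | [], [] => True
  | (a, t) :: w', tr :: trs' =>
      In tr (delta A) /\ src tr = q /\ act tr = a /\ in_guard (grd tr) (nu + t) /\
      run_from A (dst tr) (if rst tr then 0 else nu + t) w' trs'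
  | _, _ => False
  end.

Definition is_run (A : OTA) (w : timed_word) (trs : list trans) : Prop :=
  run_from A (q0 A) 0 w trs.

Fixpoint final_loc (q : Q) (trs : list trans) : Q :=
  match trs with [] => q | tr :: r => final_loc (dst tr) r end.

Definition end_loc (A : OTA) (trs : list trans) : Q := final_loc (q0 A) trs.

(* last reset: largest (1-based) i with b_i = top, or 0 *)
Fixpoint last_reset_aux (trs : list trans) (i acc : nat) : nat :=
  match trs with
  | [] => acc
  | tr :: r => last_reset_aux r (S i) (if rst tr then S i else acc)
  end.
Definition last_reset (trs : list trans) : nat := last_reset_aux trs 0 0.

Definition MQ (A : OTA) (w : timed_word) : Prop :=
  exists trs, is_run A w trs /\ accepting A (end_loc A trs) = true.

(* nu_c(w, i) = sum_{j=i+1}^{n} t_j *)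
Definition nu_c (w : timed_word) (i : nat) : R :=
  fold_right Rplus 0 (map snd (skipn i w)).

(* The test T(w1,w2,i1,i2,e); the Prop is "T = top". *)
Definition test (A : OTA) (w1 w2 : timed_word) (i1 i2 : nat) (e : timed_word)
  : Prop :=
  match e with
  | [] => (MQ A w1 <-> MQ A w2)
  | (a, t) :: e' =>
      let v1 := nu_c w1 i1 in
      let v2 := nu_c w2 i2 in
      if Rlt_dec v2 v1 then
        (MQ A (w1 ++ e) <-> MQ A (w2 ++ (a, t + (v1 - v2)) :: e'))
      else if Rlt_dec v1 v2 then
        (MQ A (w1 ++ (a, t + (v2 - v1)) :: e') <-> MQ A (w2 ++ e))
      else (MQ A (w1 ++ e) <-> MQ A (w2 ++ e))
  end.

End OTA.

Arguments trans : clear implicits.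
Arguments OTA : clear implicits.
Arguments deterministic {Sigma Q}.
Arguments complete {Sigma Q}.
Arguments valid_tw {Sigma}.
Arguments is_run {Sigma Q}.
Arguments run_from {Sigma Q}.
Arguments end_loc {Sigma Q}.
Arguments last_reset {Sigma Q}.
Arguments MQ {Sigma Q}.
Arguments test {Sigma Q}.
Arguments nu_c {Sigma}.

(* Main.v *)
Require Import Defs.
From Stdlib Require Import Reals List Lra Lia.
From mathcomp Require Import ssreflect ssrbool eqtype fintype.
Import ListNotations.
Open Scope R_scope.
Arguments rst {Sigma Q}. Arguments dst {Sigma Q}. Arguments src {Sigma Q}. Arguments act {Sigma Q}. Arguments grd {Sigma Q}.
Arguments final_loc {Sigma Q}. Arguments accepting {Sigma Q}. Arguments q0 {Sigma Q}. Arguments delta {Sigma Q}. Arguments last_reset_aux {Sigma Q}.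

Section Aux.
Variables (Sigma Q : finType) (A : OTA Sigma Q).

Fixpoint fclk (nu : R) (w : timed_word Sigma) (trs : list (trans Sigma Q)) : R :=
  match w, trs with
  | (a, t) :: w', tr :: trs' => fclk (if rst tr then 0 else nu + t) w' trs'
  | _, _ => nu
  end.

Definition Acc (q : Q) (c : R) (x : timed_word Sigma) : Prop :=
  exists tb, run_from A q c x tb /\ accepting A (final_loc q tb) = true.

Lemma final_loc_app q (ta tb : list (trans Sigma Q)) :
  final_loc q (ta ++ tb) = final_loc (final_loc q ta) tb.
Proof. elim: ta q => [|tr ta IH] q //=. Qed.

Lemma run_app (det : deterministic A) x : forall w q nu trs,
  run_from A q nu w trs ->
  forall tt, run_from A q nu (w ++ x) tt <->
    exists tb, tt = trs ++ tb /\ run_from A (final_loc q trs) (fclk nu w trs) x tb.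
Proof.
  elim => [|[a t] w IH] q nu trs.
  - case: trs => [|? ?] //= _ tt. split.
    + move=> H; by exists tt.
    + by move=> [tb [-> H]].
  - case: trs => [|tr trs] //= [Hin [Hs [Ha [Hg Hr]]]] tt. split.
    + case: tt => [|tr0 tt] //= [Hin0 [Hs0 [Ha0 [Hg0 Hr0]]]].
      have E : tr0 = tr.
      { apply: det => //; [congruence|congruence|]. exists (nu + t); by split. }
      subst tr0.
      have [H1 _] := IH _ _ _ Hr tt.
      have [tb [-> Htb]] := H1 Hr0. exists tb; split => //.
    + move=> [tb [-> Htb]] /=. do 4 (split; first done).
      have [_ H2] := IH _ _ _ Hr (trs ++ tb). apply: H2. by exists tb.
Qed.

Lemma MQ_app (det : deterministic A) w trs x :
  is_run A w trs ->
  (MQ A (w ++ x) <-> Acc (end_loc A trs) (fclk 0 w trs) x).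
Proof.
  move=> Hr. have H := run_app det x w (q0 A) 0 trs Hr.
  rewrite /MQ /Acc /end_loc /is_run. split.
  - move=> [tt [Htt Hacc]]. have [tb [E Htb]] := (proj1 (H tt)) Htt.
    exists tb; split => //. by rewrite -final_loc_app -E.
  - move=> [tb [Htb Hacc]]. exists (trs ++ tb); split.
    + apply (proj2 (H _)). by exists tb.
    + by rewrite final_loc_app.
Qed.

Lemma Acc_shift q c c' a t t' e :
  c + t = c' + t' -> (Acc q c ((a, t) :: e) <-> Acc q c' ((a, t') :: e)).
Proof.
  move=> E; rewrite /Acc /=. split.
  - move=> [tb0 [H1 H2]]. case: tb0 H1 H2 => [|tr tb] //= H1 H2. exists (tr :: tb) => /=. by rewrite -E.
  - move=> [tb0 [H1 H2]]. case: tb0 H1 H2 => [|tr tb] //= H1 H2. exists (tr :: tb) => /=. by rewrite E.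
Qed.

Lemma Acc_nil q c : Acc q c [] <-> accepting A q = true.
Proof.
  rewrite /Acc; split.
  - move=> [tb0 [H1 H2]]. by case: tb0 H1 H2 => [|? ?] //= _.
  - move=> H; by exists [].
Qed.

Lemma clk_lr : forall w trs q nu, run_from A q nu w trs ->
  ((forall i acc, last_reset_aux trs i acc = acc) /\ fclk nu w trs = nu + nu_c w 0)
  \/ exists k, (forall i acc, last_reset_aux trs i acc = (i + k)%nat)
       /\ fclk nu w trs = nu_c w k.
Proof.
  elim => [|[a t] w IH] [|tr trs] q nu //=.
  - move=> _; left; split => //. rewrite /nu_c /=; lra.
  - move=> [_ [_ [_ [_ Hr]]]].
    case: (IH _ _ _ Hr) => [[L F]|[k [L F]]].
    + case Er: (rst tr); rewrite Er in F.
      * right; exists 1%nat; split.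
        -- move=> i acc; rewrite L; lia.
        -- rewrite F /nu_c /=. lra.
      * left; split; first by move=> i acc; rewrite L.
        rewrite F /nu_c /=. lra.
    + right; exists (S k); split.
      * move=> i acc; rewrite L; lia.
      * by rewrite F.
Qed.

Lemma clk_nu w trs : is_run A w trs -> fclk 0 w trs = nu_c w (last_reset trs).
Proof.
  move=> Hr. rewrite /last_reset.
  case: (clk_lr w trs _ _ Hr) => [[L F]|[k [L F]]].
  - rewrite L F; lra.
  - by rewrite L.
Qed.

End Aux.

Theorem lemma1 (Sigma Q : finType) (A : OTA Sigma Q)
  (w1 w2 e : timed_word Sigma) (i1 i2 : nat)
  (trs1 trs2 : list (trans Sigma Q)) :
  deterministic A -> complete A ->
  valid_tw w1 -> valid_tw w2 -> valid_tw e ->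
  is_run A w1 trs1 -> is_run A w2 trs2 ->
  i1 = last_reset trs1 -> i2 = last_reset trs2 ->
  ~ test A w1 w2 i1 i2 e ->
  end_loc A trs1 <> end_loc A trs2.
Proof.
  move=> det _ _ _ _ R1 R2 -> -> NT Eq. apply: NT.
  case: e => [|[a t] e] /=;
  rewrite -?(clk_nu _ _ _ _ _ R1) -?(clk_nu _ _ _ _ _ R2).
  - rewrite -[w1]app_nil_r -[w2]app_nil_r.
    rewrite (MQ_app _ _ _ det _ _ _ R1) (MQ_app _ _ _ det _ _ _ R2) !Acc_nil Eq.
    done.
  - set v1 := fclk _ _ 0 w1 trs1. set v2 := fclk _ _ 0 w2 trs2.
    case: Rlt_dec => H1; last case: Rlt_dec => H2;
    (eapply iff_trans; first exact (MQ_app _ _ _ det _ _ _ R1));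
    (eapply iff_trans; last (apply iff_sym; exact (MQ_app _ _ _ det _ _ _ R2)));
    rewrite -/v1 -/v2 Eq; apply: Acc_shift; lra.
Qed.
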